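(* Let $x\in\widetilde W$, $v\in\mathrm{LP}(x)$ and $(\alpha,k)\in\Delta_{\mathrm{af}}$ with $\ell(x,\alpha)=0$. If $v^{-1}\alpha\in\Phi^+$, then $s_\alpha v\in\mathrm{LP}(x)$.
   Context: Let $\Phi$ be a reduced crystallographic finite root system with fixed basis $\Delta$, positive roots $\Phi^+$, negative roots $\Phi^-=-\Phi^+$, Weyl group $W$. For $\alpha\in\Phi$, $\alpha^\vee$ is its coroot and $s_\alpha$ its reflection. Let $X_*$ be an abelian group containing $\mathbb Z\Phi^\vee$, with a bilinear pairing $\langle\cdot,\cdot\rangle:X_*\times\mathbb Z\Phi\to\mathbb Z$ extending the coroot–root pairing; $W$ acts by $s_\alpha(\mu)=\mu-\langle\mu,\alpha\rangle\alpha^\vee$. $\Phi^+(\alpha)=1$ if $\alpha\in\Phi^+$, $0$ otherwise. $\widetilde W=W\ltimes X_*$ with elements $w\varepsilon^\mu$. The set of simple affine roots is $\Delta_{\mathrm{af}}=\{(\alpha,0):\alpha\in\Delta\}\cup\{(-\theta,1):\theta\text{ the highest root of an irreducible component of }\Phi\}$. For $x=w\varepsilon^\mu$ and $\alpha\in\Phi$, $\ell(x,\alpha)=\langle\mu,\alpha\rangle+\Phi^+(\alpha)-\Phi^+(w\alpha)$, and $\mathrm{LP}(x)=\{v\in W:\ell(x,v\alpha)\ge0\ \forall\alpha\in\Phi^+\}$. *)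

(* Defs.v *)
From HB Require Import structures.
From mathcomp Require Import all_boot all_order all_algebra.
From Stdlib Require Import ClassicalDescription.
Set Implicit Arguments. Unset Strict Implicit. Unset Printing Implicit Defensive.
Import Order.TTheory GRing.Theory Num.Theory.
Local Open Scope ring_scope.

Section RootSystems.
Variables (R : realFieldType) (n : nat).
Notation V := 'rV[R]_n.

Definition dot (u v : V) : R := (u *m v^T) 0 0.

Definition cartan (b a : V) : R := 2 * dot b a / dot a a.

Definition coroot (a : V) : V := (2 / dot a a) *: a.

(* matrix of the reflection s_a, acting on row vectors by v |-> v *m refl a,
   i.e. v |-> v - <v,a^vee> a *)
Definition refl (a : V) : 'M[R]_n := 1%:M - (2 / dot a a) *: (a^T *m a).

Definition root_system (Phi : seq V) : Prop :=
  [/\ 0 \notin Phi,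
      (forall a b, a \in Phi -> b \in Phi -> b *m refl a \in Phi),
      (forall a b, a \in Phi -> b \in Phi -> exists z : int, cartan b a = z%:~R)
    & (forall a (c : R), a \in Phi -> c *: a \in Phi -> c = 1 \/ c = -1)].

Definition pos_comb (Delta : seq V) (b : V) : Prop :=
  exists c : 'I_(size Delta) -> nat, b = \sum_(i < size Delta) (c i)%:R *: Delta`_i.

Definition root_basis (Phi Delta : seq V) : Prop :=
  [/\ {subset Delta <= Phi}, free Delta
    & forall b, b \in Phi -> pos_comb Delta b \/ pos_comb Delta (- b)].

Definition posroot (Phi Delta : seq V) (b : V) : Prop :=
  b \in Phi /\ pos_comb Delta b.

Definition posind (Phi Delta : seq V) (b : V) : R :=
  if excluded_middle_informative (posroot Phi Delta b) then 1 else 0.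

(* the Weyl group: matrices of products of reflections s_a, a in Phi
   (w acts on v by v |-> v *m w; the composite s_a o w has matrix w *m refl a) *)
Inductive inW (Phi : seq V) : 'M[R]_n -> Prop :=
  | inW1 : inW Phi 1%:M
  | inWr : forall w a, inW Phi w -> a \in Phi -> inW Phi (w *m refl a).

(* connectedness for the decomposition into irreducible components:
   reflexive-transitive closure of non-orthogonality on Phi *)
Inductive conn (Phi : seq V) : V -> V -> Prop :=
  | conn_refl : forall a, conn Phi a a
  | conn_step : forall a b c, conn Phi a b -> b \in Phi -> c \in Phi ->
                  dot b c != 0 -> conn Phi a c.

Definition highest_root (Phi Delta : seq V) (theta : V) : Prop :=
  theta \in Phi /\
  forall b, b \in Phi -> conn Phi theta b -> pos_comb Delta (theta - b).

Definition simple_affine (Phi Delta : seq V) (a : V) (k : int) : Prop :=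
  (a \in Delta /\ k = 0) \/ (k = 1 /\ highest_root Phi Delta (- a)).

(* X_* : zmodType X with coroot embedding cv and pairing pr : X -> V -> R,
   additive in X and R-linear in V (the R-linear extension of the
   Z-bilinear pairing X_* x ZPhi -> Z), integral on roots, extending the
   coroot-root pairing; cv extends to a group morphism Z Phi^vee -> X *)
Definition cochar_datum (Phi : seq V) (X : zmodType) (cv : V -> X)
    (pr : X -> V -> R) : Prop :=
  [/\ (forall mu nu v, pr (mu + nu) v = pr mu v + pr nu v),
      (forall mu (c : R) u v, pr mu (c *: u + v) = c * pr mu u + pr mu v),
      (forall mu b, b \in Phi -> exists z : int, pr mu b = z%:~R),
      (forall a b, a \in Phi -> b \in Phi -> pr (cv a) b = cartan b a)
    & (forall c : 'I_(size Phi) -> int,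
         \sum_(i < size Phi) coroot Phi`_i *~ c i = 0 ->
         \sum_(i < size Phi) cv Phi`_i *~ c i = 0)].

(* l(x, b) for x = w eps^mu *)
Definition ell (Phi Delta : seq V) (X : zmodType) (pr : X -> V -> R)
    (w : 'M[R]_n) (mu : X) (b : V) : R :=
  pr mu b + posind Phi Delta b - posind Phi Delta (b *m w).

Definition LP (Phi Delta : seq V) (X : zmodType) (pr : X -> V -> R)
    (w : 'M[R]_n) (mu : X) (v : 'M[R]_n) : Prop :=
  inW Phi v /\
  forall b, posroot Phi Delta b -> 0 <= ell Phi Delta pr w mu (b *m v).

End RootSystems.

(* Main.v *)
Require Import Defs.
From HB Require Import structures.
From mathcomp Require Import all_boot all_order all_algebra.
From mathcomp Require Import ring lra.
From Stdlib Require Import ClassicalDescription.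
Import Order.TTheory GRing.Theory Num.Theory.
Local Open Scope ring_scope.
Set Implicit Arguments. Unset Strict Implicit.

Lemma pos0 (R : realFieldType) (n : nat) (D : seq 'rV[R]_n) : pos_comb D 0.
Proof. by exists (fun _ => 0%N); rewrite big1 // => i _; rewrite scale0r. Qed.

Lemma posD (R : realFieldType) (n : nat) (D : seq 'rV[R]_n) x y :
  pos_comb D x -> pos_comb D y -> pos_comb D (x + y).
Proof.
move=> [c ->] [d ->]; exists (fun i => (c i + d i)%N).
by rewrite -big_split; apply: eq_bigr => i _; rewrite natrD scalerDl.
Qed.

Lemma posZ (R : realFieldType) (n : nat) (D : seq 'rV[R]_n) x (m : nat) :
  pos_comb D x -> pos_comb D (m%:R *: x).
Proof.
move=> [c ->]; exists (fun i => (m * c i)%N).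
by rewrite scaler_sumr; apply: eq_bigr => i _; rewrite natrM scalerA.
Qed.

Lemma pos_free (R : realFieldType) (n : nat) (D : seq 'rV[R]_n) x :
  free D -> pos_comb D x -> pos_comb D (- x) -> x = 0.
Proof.
move=> Hf0 [c Hc] [d Hd].
have /freeP Hf : free (in_tuple D) by [].
have H0 : forall i, (c i + d i)%:R = 0 :> R.
  apply: Hf; rewrite /=.
  under eq_bigr do rewrite natrD scalerDl.
  by rewrite big_split /= -Hc -Hd subrr.
rewrite Hc big1 // => i _.
have := H0 i; move/eqP; rewrite pnatr_eq0 addn_eq0 => /andP[/eqP -> _].
by rewrite scale0r.
Qed.

Lemma pos_sum0 (R : realFieldType) (n : nat) (D : seq 'rV[R]_n) x y :
  free D -> pos_comb D x -> pos_comb D y -> x + y = 0 -> x = 0.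
Proof.
move=> Hf Hx Hy Hxy; apply: (pos_free Hf Hx).
by have -> : - x = y by apply/eqP; rewrite eq_sym -subr_eq0 opprK addrC Hxy.
Qed.
Lemma dot_self_eq0 (R : realFieldType) (n : nat) (b : 'rV[R]_n) :
  dot b b = 0 -> b = 0.
Proof.
rewrite /dot mxE => H; apply/rowP => j; rewrite mxE.
have H0 : forall i : 'I_n, true -> 0 <= b 0 i * b^T i 0.
  by move=> i _; rewrite mxE -expr2 sqr_ge0.
have := @psumr_eq0P _ _ _ _ H0 H j isT.
by rewrite mxE => /eqP; rewrite -expr2 sqrf_eq0 => /eqP.
Qed.

Lemma refl_mul (R : realFieldType) (n : nat) (a g : 'rV[R]_n) :
  g *m refl a = g - cartan g a *: a.
Proof.
rewrite /refl mulmxBr mulmx1 -scalemxAr mulmxA [g *m a^T]mx11_scalar mul_scalar_mx.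
by rewrite scalerA /cartan /dot mulrAC.
Qed.

Lemma refl_opp (R : realFieldType) (n : nat) (a : 'rV[R]_n) : refl (- a) = refl a.
Proof. by rewrite /refl /dot linearN /= mulmxN mulNmx opprK mulNmx mulmxN opprK. Qed.

Lemma dot_lin (R : realFieldType) (n : nat) (u v w : 'rV[R]_n) c :
  dot (c *: u + v) w = c * dot u w + dot v w.
Proof. by rewrite /dot mulmxDl -scalemxAl !mxE. Qed.

Lemma dotC (R : realFieldType) (n : nat) (u v : 'rV[R]_n) : dot u v = dot v u.
Proof. by rewrite /dot -[u *m v^T]trmxK trmx_mul trmxK [in LHS]mxE. Qed.

Lemma dot_neq0 (R : realFieldType) (n : nat) (a : 'rV[R]_n) : a != 0 -> dot a a != 0.
Proof. by move=> Ha; apply/eqP => /dot_self_eq0 /eqP; apply/negP. Qed.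

Lemma root_neq0 (R : realFieldType) (n : nat) (Phi : seq 'rV[R]_n) b :
  root_system Phi -> b \in Phi -> b != 0.
Proof. by case=> H0 _ _ _ Hb; apply: contraNneq H0 => <-. Qed.

Lemma root_opp (R : realFieldType) (n : nat) (Phi : seq 'rV[R]_n) b :
  root_system Phi -> b \in Phi -> - b \in Phi.
Proof.
move=> Hrs Hb; have := Hrs; case=> _ Hrefl _ _.
have := Hrefl _ _ Hb Hb; rewrite refl_mul /cartan.
have Hd := dot_neq0 (root_neq0 Hrs Hb).
rewrite mulfK //.
suff -> : b - 2 *: b = - b by [].
by rewrite scalerDl scale1r opprD addrA subrr sub0r.
Qed.

Lemma refl_invol (R : realFieldType) (n : nat) (a g : 'rV[R]_n) :
  a != 0 -> g *m refl a *m refl a = g.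
Proof.
move=> Ha; have Hd := dot_neq0 Ha.
rewrite !refl_mul /cartan.
have -> : g - 2 * dot g a / dot a a *: a = (- (2 * dot g a / dot a a)) *: a + g.
  by rewrite scaleNr addrC.
rewrite dot_lin.
set q := - _; set p := 2 * _ / _.
have -> : q *: a + g - p *: a = (q - p) *: a + g.
  by rewrite scalerBl addrAC.
suff -> : q - p = 0 by rewrite scale0r add0r.
by rewrite /p /q; field.
Qed.

Lemma refl_sq (R : realFieldType) (n : nat) (a : 'rV[R]_n) :
  a != 0 -> refl a *m refl a = 1%:M.
Proof.
move=> Ha; apply/row_matrixP => i; rewrite row_mul.
have -> : row i (refl a) = row i 1%:M *m refl a by rewrite -row_mul mul1mx.
exact: refl_invol.
Qed.

Lemma inW_Phi (R : realFieldType) (n : nat) (Phi : seq 'rV[R]_n) w b :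
  root_system Phi -> inW Phi w -> b \in Phi -> b *m w \in Phi.
Proof.
move=> Hrs Hw Hb; elim: Hw => [|w' a Hw' IH Ha]; first by rewrite mulmx1.
by rewrite mulmxA; case: Hrs => _ Hrefl _ _; apply: Hrefl.
Qed.

Lemma inW_inv (R : realFieldType) (n : nat) (Phi : seq 'rV[R]_n) w :
  root_system Phi -> inW Phi w ->
  exists u, w *m u = 1%:M /\ forall b, b \in Phi -> b *m u \in Phi.
Proof.
move=> Hrs; elim => [|w' a Hw' [u [Hu Hu2]] Ha].
  by exists 1%:M; split; [rewrite mulmx1 | move=> b Hb; rewrite mulmx1].
exists (refl a *m u); split.
  by rewrite mulmxA -(mulmxA w') refl_sq ?mulmx1 // (root_neq0 Hrs Ha).
move=> b Hb; rewrite mulmxA; apply: Hu2.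
by case: Hrs => _ Hrefl _ _; apply: Hrefl.
Qed.

Lemma posind_cases (R : realFieldType) (n : nat) (Phi D : seq 'rV[R]_n) b :
  root_system Phi -> root_basis Phi D -> b \in Phi ->
  (posind Phi D b = 1 /\ pos_comb D b) \/
  (posind Phi D b = 0 /\ pos_comb D (- b) /\ ~ pos_comb D b).
Proof.
move=> Hrs [_ Hf Hpm] Hb; rewrite /posind.
destruct (excluded_middle_informative (posroot Phi D b)) as [H|Hn]; first by left; split => //; case: H.
right; split => //; split; last by move=> Hp; apply: Hn.
by case: (Hpm _ Hb) => // Hp; case: Hn.
Qed.

Lemma posind_opp (R : realFieldType) (n : nat) (Phi D : seq 'rV[R]_n) b :
  root_system Phi -> root_basis Phi D -> b \in Phi ->
  posind Phi D (- b) = 1 - posind Phi D b.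
Proof.
move=> Hrs HB Hb; have Hnb := root_opp Hrs Hb.
have Hf : free D by case: HB.
case: (posind_cases Hrs HB Hb) => [[-> Hp]|[-> [Hp Hnp]]];
  case: (posind_cases Hrs HB Hnb) => [[-> Hp']|[-> [Hp' Hnp']]] //.
- by have := pos_free Hf Hp Hp' => /eqP; rewrite (negbTE (root_neq0 Hrs Hb)).
all: try by rewrite ?subr0 ?subrr.

Qed.

Lemma pos_simple (R : realFieldType) (n : nat) (Phi D : seq 'rV[R]_n) a g h (m : nat) :
  root_system Phi -> root_basis Phi D -> a \in D -> g \in Phi ->
  pos_comb D g -> pos_comb D h -> g + h = m%:R *: a -> g = a.
Proof.
move=> Hrs [HDP Hf _] HaD Hg [c Hc] [d Hd] Hgh.
have Hj : (index a D < size D)%N by rewrite index_mem.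
set j := Ordinal Hj.
have HDj : D`_j = a := nth_index 0 HaD.
have /freeP Hfree : free (in_tuple D) by [].
have Hk := Hfree (fun i => (c i + d i)%:R - (i == j)%:R * m%:R).
have Hs : \sum_(i < size D) ((i == j)%:R * m%:R) *: D`_i = m%:R *: a :> 'rV[R]_n.
  rewrite (bigD1 j) //= eqxx mul1r big1 ?addr0 ?HDj // => i /negbTE ->.
  by rewrite mul0r scale0r.
have {Hk} Hk : forall i, (c i + d i)%:R - (i == j)%:R * m%:R = 0 :> R.
  apply: Hk; rewrite /=.
  under eq_bigr do rewrite scalerBl natrD scalerDl.
  by rewrite sumrB big_split /= -Hc -Hd Hs Hgh subrr.
have Hci : forall i, i != j -> c i = 0%N.
  move=> i /negbTE Hi; have := Hk i; rewrite Hi mul0r subr0 => /eqP.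
  by rewrite pnatr_eq0 addn_eq0 => /andP[/eqP -> _].
have Hgj : g = (c j)%:R *: a.
  rewrite Hc (bigD1 j) //= big1 ?addr0 ?HDj // => i Hi.
  by rewrite Hci // scale0r.
have := Hrs; case=> _ _ _ Hred.
have [Hcj|Hcj] := Hred a (c j)%:R (HDP _ HaD) ltac:(by rewrite -Hgj).
  by rewrite Hgj Hcj scale1r.
have H0 : 0 <= (c j)%:R :> R by rewrite ler0n.
by move: H0; rewrite Hcj ler0N1.
Qed.
Lemma arith0 (R : realFieldType) (mm A Aw G H Gw Hw : R) :
  1 <= mm -> (Aw = 0 \/ Aw = 1) -> (G = 0 \/ G = 1) -> (H = 0 \/ H = 1) ->
  (Gw = 0 \/ Gw = 1) -> (Hw = 0 \/ Hw = 1) ->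
  (Aw = 1 -> Gw = 1 \/ Hw = 1) -> A = 1 ->
  (G = 1 -> H = 1 -> mm = 2 /\ Gw = Aw /\ Hw = Aw) ->
  mm * (Aw - A) + G + H - Gw - Hw <= 0.
Proof.
move=> Hm HA HG HH HGw HHw F1 -> F2.
case: HG => HG; case: HH => HH.
- rewrite HG HH; case: HA => HA; rewrite HA; first by case: HGw=> ?; case: HHw=> ?; lra.
  by case: (F1 HA) => ?; case: HGw=> ?; case: HHw=> ?; lra.
- rewrite HG HH; case: HA => HA; rewrite HA; first by case: HGw=> ?; case: HHw=> ?; lra.
  by case: (F1 HA) => ?; case: HGw=> ?; case: HHw=> ?; lra.
- rewrite HG HH; case: HA => HA; rewrite HA; first by case: HGw=> ?; case: HHw=> ?; lra.
  by case: (F1 HA) => ?; case: HGw=> ?; case: HHw=> ?; lra.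
- have [-> [-> ->]] := F2 HG HH; rewrite HG HH; lra.
Qed.

Lemma arith1 (R : realFieldType) (mm A Aw G H Gw Hw : R) :
  (mm = 1 \/ 2 <= mm) -> (Aw = 0 \/ Aw = 1) ->
  (Gw = 0 \/ Gw = 1) -> (Hw = 0 \/ Hw = 1) ->
  (Aw = 1 -> Gw = 1 \/ Hw = 1) -> A = 0 -> G = 0 -> H = 0 ->
  (Aw = 1 -> 2 <= mm -> mm = 2 /\ Gw = 1 /\ Hw = 1) ->
  mm * (Aw - A) + G + H - Gw - Hw <= 0.
Proof.
move=> Hm HA HGw HHw F1 -> -> -> F2.
case: HA => HA; rewrite HA.
  case: Hm => Hm; case: HGw=> ?; case: HHw=> ?; lra.
case: Hm => Hm.
  by rewrite Hm; case: (F1 HA) => ?; case: HGw=> ?; case: HHw=> ?; lra.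
have [-> [-> ->]] := F2 HA Hm; lra.
Qed.

Lemma pr_lin (R : realFieldType) (n : nat) (Phi : seq 'rV[R]_n) (X : zmodType)
  (cv : 'rV[R]_n -> X) (pr : X -> 'rV[R]_n -> R) mu :
  cochar_datum Phi cv pr ->
  [/\ pr mu 0 = 0, (forall u v, pr mu (u + v) = pr mu u + pr mu v),
      (forall c u, pr mu (c *: u) = c * pr mu u) & (forall u, pr mu (- u) = - pr mu u)].
Proof.
case=> _ Hlin _ _ _.
have H0 : pr mu 0 = 0.
  have := Hlin mu 1 0 0; rewrite scale1r addr0 mul1r => H.
  by apply: (@addrI _ (pr mu 0)); rewrite addr0 -H.
have HZ : forall c u, pr mu (c *: u) = c * pr mu u.
  by move=> c u; have := Hlin mu c u 0; rewrite addr0 H0 addr0.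
split => //.
- by move=> u v; have := Hlin mu 1 u v; rewrite scale1r mul1r.
- by move=> u; rewrite -scaleN1r HZ mulN1r.
Qed.

Lemma ell_opp (R : realFieldType) (n : nat) (Phi D : seq 'rV[R]_n) (X : zmodType)
  (cv : 'rV[R]_n -> X) (pr : X -> 'rV[R]_n -> R) w mu t :
  root_system Phi -> root_basis Phi D -> cochar_datum Phi cv pr -> inW Phi w ->
  t \in Phi -> ell Phi D pr w mu (- t) = - ell Phi D pr w mu t.
Proof.
move=> Hrs HB HX Hw Ht; have [_ _ _ HN] := pr_lin mu HX.
rewrite /ell mulNmx HN !posind_opp //; last exact: inW_Phi.
by rewrite !opprD !opprK; ring.
Qed.

Lemma pos_mem (R : realFieldType) (n : nat) (D : seq 'rV[R]_n) a :
  a \in D -> pos_comb D a.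
Proof.
move=> HaD; have Hj : (index a D < size D)%N by rewrite index_mem.
exists (fun i => (i == Ordinal Hj : nat)).
rewrite (bigD1 (Ordinal Hj)) //= eqxx scale1r big1 ?addr0 ?nth_index //.
by move=> i /negbTE ->; rewrite scale0r.
Qed.

Lemma dotNl (R : realFieldType) (n : nat) (u v : 'rV[R]_n) : dot (- u) v = - dot u v.
Proof. by rewrite /dot mulNmx mxE. Qed.

Lemma core (R : realFieldType) (n : nat) (Phi D : seq 'rV[R]_n) (X : zmodType)
  (cv : 'rV[R]_n -> X) (pr : X -> 'rV[R]_n -> R) w mu a k g h (m : nat) :
  root_system Phi -> root_basis Phi D -> cochar_datum Phi cv pr -> inW Phi w ->
  simple_affine Phi D a k -> ell Phi D pr w mu a = 0 ->
  g \in Phi -> h \in Phi -> (0 < m)%N -> g + h = m%:R *: a ->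
  dot g a != 0 -> dot h a != 0 ->
  ell Phi D pr w mu g + ell Phi D pr w mu h <= 0.
Proof.
move=> Hrs HB HX Hw Hsa Hell Hg Hh Hm Hgh Hga Hha.
have [HDP Hf Hpm] := HB.
have [H0 HD HZ HN] := pr_lin mu HX.
have Ha : a \in Phi.
  case: Hsa => [[HaD _]|[_ [Hth _]]]; first exact: HDP.
  by rewrite -[a]opprK; apply: root_opp.
have Haw := inW_Phi Hrs Hw Ha.
have Hgw := inW_Phi Hrs Hw Hg.
have Hhw := inW_Phi Hrs Hw Hh.
have Hmne : (m%:R : R) != 0 by rewrite pnatr_eq0 -lt0n.
set pi := posind Phi D.
have Hsumw : g *m w + h *m w = m%:R *: (a *m w) by rewrite -mulmxDl Hgh scalemxAl.
have Hpa : pr mu a = pi (a *m w) - pi a.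
  move: Hell; rewrite /ell => H; apply/eqP; rewrite -subr_eq0 -H; apply/eqP; rewrite /pi; ring.
have Hpr : pr mu g + pr mu h = m%:R * pr mu a by rewrite -HD Hgh HZ.
have -> : ell Phi D pr w mu g + ell Phi D pr w mu h =
   m%:R * (pi (a *m w) - pi a) + pi g + pi h - pi (g *m w) - pi (h *m w).
  by rewrite /ell -Hpa -Hpr /pi; ring.
have bit : forall b, b \in Phi -> pi b = 0 \/ pi b = 1.
  by move=> b Hb; rewrite /pi; case: (posind_cases Hrs HB Hb) => [[->]|[->]]; auto.
have F1 : pi (a *m w) = 1 -> pi (g *m w) = 1 \/ pi (h *m w) = 1.
  move=> HAw; rewrite /pi.
  case: (posind_cases Hrs HB Hgw) => [[-> _]|[_ [Hng _]]]; first by left.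
  case: (posind_cases Hrs HB Hhw) => [[-> _]|[_ [Hnh _]]]; first by right.
  exfalso.
  have Hpaw : pos_comb D (a *m w).
    case: (posind_cases Hrs HB Haw) => [[_ Hp]|[H1 _]] //.
    by move: HAw; rewrite /pi H1 => /eqP; rewrite eq_sym oner_eq0.
  have Hp1 := posZ m Hpaw.
  have Hp2 : pos_comb D (- (m%:R *: (a *m w))) by rewrite -Hsumw opprD; apply: posD.
  have := pos_free Hf Hp1 Hp2 => /eqP; rewrite scaler_eq0 (negbTE Hmne) /=.
  by rewrite (negbTE (root_neq0 Hrs Haw)).
have posof : forall b, b \in Phi -> pi b = 1 -> pos_comb D b.
  move=> b Hb; rewrite /pi; case: (posind_cases Hrs HB Hb) => [[_ Hp]|[-> _]] // /eqP.
  by rewrite eq_sym oner_eq0.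
have Hane : a != 0 := root_neq0 Hrs Ha.
have m2 : g = a -> h = a -> (m%:R : R) = 2.
  move=> Hg1 Hh1; apply/eqP; rewrite -subr_eq0; apply/eqP.
  have : (m%:R - 2) *: a = 0.
    by rewrite scalerBl -Hgh Hg1 Hh1 scaler_nat mulr2n subrr.
  by move/eqP; rewrite scaler_eq0 (negbTE Hane) orbF => /eqP.
case: Hsa => [[HaD _]|[_ [Hth Hhi]]].
  apply: arith0 (bit _ Haw) (bit _ Hg) (bit _ Hh) (bit _ Hgw) (bit _ Hhw) F1 _ _.
  - by rewrite ler1n.
  - rewrite /pi; case: (posind_cases Hrs HB Ha) => [[-> _]|[_ [_ Hn]]] //.
    by case: Hn; apply: pos_mem.
  move=> HG HH.
  have Hg1 := pos_simple Hrs HB HaD Hg (posof _ Hg HG) (posof _ Hh HH) Hgh.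
  have Hh1 : h = a.
    by apply: (pos_simple (m:=m) Hrs HB HaD Hh (posof _ Hh HH) (posof _ Hg HG)); rewrite addrC.
  by split; [apply: m2 | rewrite Hg1 Hh1].
have hi : forall b, b \in Phi -> dot b a != 0 -> pos_comb D (- a - b).
  move=> b Hb Hd; apply: Hhi => //; apply: (conn_step (conn_refl _ _) Hth Hb).
  by rewrite dotNl dotC oppr_eq0.
have negof : forall b, b \in Phi -> ~ pos_comb D b -> pos_comb D (- b).
  by move=> b Hb Hn; case: (Hpm _ Hb).
have Hg' : g = m%:R *: a - h by rewrite -Hgh addrK.
have Hth_pos : pos_comb D (- a).
  case: (Hpm _ Hth) => // Hn; rewrite opprK in Hn; exfalso.
  have H1 := posD (hi _ Hg Hga) (hi _ Hh Hha).
  have H2 := posZ m.+2 Hn.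
  have E : - a - g + (- a - h) = - ((m.+2)%:R *: a).
    by rewrite Hg'; apply/rowP => i; rewrite !mxE -[m.+2]addn2 natrD; ring.
  rewrite E in H1.
  have := pos_free Hf H2 H1 => /eqP; rewrite scaler_eq0 (negbTE Hane) orbF.
  by rewrite pnatr_eq0.
have Hpa0 : pi a = 0.
  rewrite /pi; case: (posind_cases Hrs HB Ha) => [[_ Hp]|[-> _]] //; exfalso.
  by have := pos_free Hf Hp Hth_pos => /eqP; rewrite (negbTE Hane).
have nopos : forall x y, x \in Phi -> y \in Phi -> x + y = m%:R *: a ->
    dot y a != 0 -> ~ pos_comb D x.
  move=> x y Hx Hy Hxy Hya Hpx.
  have Hx' : x = m%:R *: a - y by rewrite -Hxy addrK.
  case: (Hpm _ Hy) => Hpy.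
  - have H1 := posD Hpx Hpy; rewrite Hxy in H1.
    have H2 := posZ m Hth_pos; rewrite scalerN in H2.
    have := pos_free Hf H1 H2 => /eqP; rewrite scaler_eq0 (negbTE Hmne).
    by rewrite (negbTE Hane).
  - have Hny := root_opp Hrs Hy.
    have HXX := hi _ Hny ltac:(by rewrite dotNl oppr_eq0).
    destruct m as [|m']; first done.
    have HY := posD (posZ m' Hth_pos) Hpx.
    have E : (m'%:R *: - a + x) + (- a - - y) = 0.
      by rewrite Hx'; apply/rowP => i; rewrite !mxE -[m'.+1]addn1 natrD; ring.
    have HY0 := pos_sum0 Hf HY HXX E.
    have Hnx : pos_comb D (- x).
      have -> : - x = m'%:R *: - a by apply/eqP; rewrite eq_sym -subr_eq0 opprK HY0.
      exact: posZ.
    by have := pos_free Hf Hpx Hnx => /eqP; rewrite (negbTE (root_neq0 Hrs Hx)).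
have eqa : forall x y, x \in Phi -> y \in Phi -> x + y = m%:R *: a ->
    dot x a != 0 -> dot y a != 0 -> (2 <= m)%N -> x = a.
  move=> x y Hx Hy Hxy Hxa Hya H2m.
  have P2 := hi _ (root_opp Hrs Hx) ltac:(by rewrite dotNl oppr_eq0).
  have P1 := hi _ (root_opp Hrs Hy) ltac:(by rewrite dotNl oppr_eq0).
  have Hx' : x = m%:R *: a - y by rewrite -Hxy addrK.
  destruct m as [|[|m'']] => //.
  have E : (- a - - x) + ((- a - - y) + m''%:R *: - a) = 0.
    by rewrite Hx'; apply/rowP => i; rewrite !mxE -[m''.+2]addn2 natrD; ring.
  have := pos_sum0 Hf P2 (posD P1 (posZ m'' Hth_pos)) E.
  by move/eqP; rewrite opprK addrC subr_eq0 => /eqP.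
apply: arith1 _ (bit _ Haw) (bit _ Hgw) (bit _ Hhw) F1 Hpa0 _ _ _.
- have : (m == 1)%N || (2 <= m)%N by move: Hm; rewrite leq_eqVlt => /orP [/eqP <-|->]; rewrite ?orbT.
  by case/orP => [/eqP ->|H]; [left | right; rewrite ler_nat].
- rewrite /pi; case: (posind_cases Hrs HB Hg) => [[_ Hp]|[-> _]] //.
  by case: (nopos _ _ Hg Hh Hgh Hha Hp).
- rewrite /pi; case: (posind_cases Hrs HB Hh) => [[_ Hp]|[-> _]] //.
  by case: (nopos _ _ Hh Hg ltac:(by rewrite addrC) Hga Hp).
move=> HAw H2.
have H2m : (2 <= m)%N by rewrite -(ler_nat R).
have Hg1 := eqa _ _ Hg Hh Hgh Hga Hha H2m.
have Hh1 := eqa _ _ Hh Hg ltac:(by rewrite addrC) Hha Hga H2m.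
by split; [exact: m2 | rewrite Hg1 Hh1 HAw].
Qed.

Unset Implicit Arguments.

Theorem corollary4p6 (R : realFieldType) (n : nat) (Phi Delta : seq 'rV[R]_n)
    (X : zmodType) (cv : 'rV[R]_n -> X) (pr : X -> 'rV[R]_n -> R)
    (w : 'M[R]_n) (mu : X) (v : 'M[R]_n) (a : 'rV[R]_n) (k : int) :
  root_system Phi -> root_basis Phi Delta -> cochar_datum Phi cv pr ->
  inW Phi w ->
  LP Phi Delta pr w mu v ->
  simple_affine Phi Delta a k ->
  ell Phi Delta pr w mu a = 0 ->
  posroot Phi Delta (a *m invmx v) ->
  LP Phi Delta pr w mu (v *m refl a).
Proof.
move=> Hrs HB HX Hw [Hv Hlp] Hsa Hell Hpos.
have [HDP Hf Hpm] := HB.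
have Ha : a \in Phi.
  case: Hsa => [[HaD _]|[_ [Hth _]]]; first exact: HDP.
  by rewrite -[a]opprK; apply: root_opp.
have Hane : a != 0 := root_neq0 Hrs Ha.
have Hdaa := dot_neq0 Hane.
split.
  case: Hsa => [[HaD _]|[_ [Hth _]]]; first exact: inWr Hv (HDP _ HaD).
  by rewrite -refl_opp; apply: inWr.
move=> b Hbpos; have [Hb Hbp] := Hbpos.
have [u [Hvu Hu]] := inW_inv Hrs Hv.
have [Hvunit _] := mulmx1_unit Hvu.
have Hinv : invmx v = u by rewrite -[invmx v]mulmx1 -Hvu mulmxA mulVmx // mul1mx.
have Huv : u *m v = 1%:M by rewrite -Hinv mulVmx.
rewrite Hinv in Hpos; have [Hdel Hdelp] := Hpos.
have Hg : b *m v \in Phi := inW_Phi Hrs Hv Hb.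
have Hs : b *m v *m refl a \in Phi by case: Hrs => _ Hrefl _ _; apply: Hrefl.
rewrite mulmxA.
have Hsu : b *m v *m refl a *m u \in Phi := Hu _ Hs.
have Hsv : b *m v *m refl a = (b *m v *m refl a *m u) *m v by rewrite -[RHS]mulmxA Huv mulmx1.
case: (Hpm _ Hsu) => Hpsu.
  by rewrite Hsv; apply: Hlp.
move: Hs Hsu Hsv Hpsu; rewrite refl_mul.
set g := b *m v; set c := cartan g a => Hs Hsu Hsv Hpsu.
have [z Hz] : exists z : int, c = z%:~R by case: Hrs => _ _ Hint _; apply: Hint.
have Hgu : g *m u = b by rewrite /g -mulmxA -Hinv mulmxV // mulmx1.
have Hsu_eq : (g - c *: a) *m u = b - c *: (a *m u) by rewrite mulmxBl -scalemxAl Hgu.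
have Hsu0 : g - c *: a != 0 := root_neq0 Hrs Hs.
have Hsu0' : (g - c *: a) *m u != 0 := root_neq0 Hrs Hsu.
have [m [Hm Hcm]] : exists m : nat, (0 < m)%N /\ c = m%:R.
  case: z Hz => [[|m]|m] Hz.
  - exfalso; move: Hpsu; rewrite Hsu_eq Hz scale0r subr0 => Hpsu.
    by have := pos_free Hf Hbp Hpsu => /eqP; rewrite (negbTE (root_neq0 Hrs Hb)).
  - by exists m.+1; split.
  - exfalso.
    have Hp : pos_comb Delta ((g - c *: a) *m u).
      rewrite Hsu_eq Hz NegzE -scaleNr rmorphN /= opprK.
      by apply: posD => //; apply: posZ.
    by have := pos_free Hf Hp Hpsu => /eqP; rewrite (negbTE Hsu0').
set h := - (g - c *: a).
have Hh : h \in Phi by apply: root_opp.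
have Hgh : g + h = m%:R *: a by rewrite /h opprB addrC subrK Hcm.
have Hmne : (m%:R : R) != 0 by rewrite pnatr_eq0 -lt0n.
have Hcdef : c * dot a a = 2 * dot g a by rewrite /c /cartan mulfVK.
have Hga : dot g a != 0.
  apply: contra Hmne => /eqP H0; apply/eqP.
  by rewrite -Hcm; apply: (mulIf Hdaa); rewrite Hcdef H0 mulr0 mul0r.
have Hha : dot h a != 0.
  have -> : dot h a = dot g a.
    have -> : h = c *: a + (- g) by rewrite /h opprB addrC.
    rewrite dot_lin dotNl Hcdef; ring.
  exact: Hga.
have Hcore := core Hrs HB HX Hw Hsa Hell Hg Hh Hm Hgh Hga Hha.
have Hellg : 0 <= ell Phi Delta pr w mu g := Hlp b Hbpos.
have Hellh : 0 <= ell Phi Delta pr w mu h.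
  have -> : h = - ((g - c *: a) *m u) *m v by rewrite mulNmx -Hsv.
  by apply: Hlp; split => //; apply: root_opp.
have -> : g - c *: a = - h by rewrite /h opprK.
rewrite (@ell_opp _ _ _ _ _ _ _ w mu h Hrs HB HX Hw Hh) oppr_ge0.
by apply: le_trans Hcore; rewrite lerDr.
Qed.
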